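(* Let $\mathcal{C}$ be a permutation class (resp. a polyomino class) and let $\mathcal{M}$ be its canonical $m$-basis. Then $\mathcal{C}=Av_{\mathfrak{S}}(\mathcal{M})$ (resp. $\mathcal{C}=Av_{\mathfrak{P}}(\mathcal{M})$).
   Context: Binary matrices are matrices with entries in $\{0,1\}$; $M'\preccurlyeq M$ (submatrix order) means $M'$ is obtained from $M$ by deleting some rows and/or columns. A permutation $\sigma$ of $\{1,\dots,n\}$ is identified with its permutation matrix $M_\sigma$, where $M_\sigma(i,j)=1$ iff $i=\sigma(j)$ (rows numbered bottom to top); a permutation class is a set of permutations closed under taking patterns (equivalently, closed under taking submatrices that are permutation matrices). A quasi-permutation matrix is a binary matrix with at most one $1$ in each row and each column. A polyomino is a finite edge-connected union of unit cells of $\mathbb{Z}^2$ up to translation, identified with the binary matrix of its minimal bounding rectangle (entry $(i,j)$ equal to $1$ iff the unit square $[j-1,j]\times[i-1,i]$ is a cell, the polyomino placed in the positive quarter plane touching both axes); a polyomino class is a set of polyominoes closed under taking submatrices that are polyominoes. For a set $\mathcal{M}$ of matrices, $Av_{\mathfrak{S}}(\mathcal{M})$ (resp. $Av_{\mathfrak{P}}(\mathcal{M})$) is the set of permutations (resp. polyominoes) with no submatrix in $\mathcal{M}$. For a class $\mathcal{C}$, let $\mathcal{C}^+$ be the set of binary matrices that are submatrices of some element of $\mathcal{C}$. The canonical $m$-basis of a permutation class (resp. polyomino class) $\mathcal{C}$ is the set of quasi-permutation matrices (resp. binary matrices) not in $\mathcal{C}^+$ that are minimal for $\preccurlyeq$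 among quasi-permutation matrices (resp. binary matrices) not in $\mathcal{C}^+$. *)

(* Defs.v *)
From mathcomp Require Import all_boot all_algebra.
Set Implicit Arguments. Unset Strict Implicit. Unset Printing Implicit Defensive.

Record bmat := BMat { nrows : nat; ncols : nat; bmx : 'M[bool]_(nrows, ncols) }.

Definition strict_incr m n (f : 'I_m -> 'I_n) : Prop :=
  forall i j : 'I_m, i < j -> f i < f j.

Definition subm (A B : bmat) : Prop :=
  exists (f : 'I_(nrows A) -> 'I_(nrows B)) (g : 'I_(ncols A) -> 'I_(ncols B)),
    [/\ strict_incr f, strict_incr g &
        forall i j, bmx A i j = bmx B (f i) (g j)].

Definition is_perm_mat (A : bmat) : Prop :=
  (forall i, #|[pred j | bmx A i j]| = 1) /\ (forall j, #|[pred i | bmx A i j]| = 1).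

Definition is_quasi_perm (A : bmat) : Prop :=
  (forall i, #|[pred j | bmx A i j]| <= 1) /\ (forall j, #|[pred i | bmx A i j]| <= 1).

Arguments BMat : clear implicits.
Definition cell_adj (A : bmat) : rel ('I_(nrows A) * 'I_(ncols A)) :=
  fun a b => [&& bmx A a.1 a.2, bmx A b.1 b.2 &
    ((a.1 == b.1 :> nat) && ((a.2.+1 == b.2 :> nat) || (b.2.+1 == a.2 :> nat)))
    || ((a.2 == b.2 :> nat) && ((a.1.+1 == b.1 :> nat) || (b.1.+1 == a.1 :> nat)))].

(* Polyomino (as the binary matrix of its minimal bounding rectangle):
   nonempty, every row and column meets a cell (minimality of the bounding
   rectangle), and the cells are edge-connected. *)
Arguments cell_adj : clear implicits.
Definition is_polyomino (A : bmat) : Prop :=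
  [/\ exists i j, bmx A i j,
      forall i, exists j, bmx A i j,
      forall j, exists i, bmx A i j &
      forall a b : 'I_(nrows A) * 'I_(ncols A),
        bmx A a.1 a.2 -> bmx A b.1 b.2 -> connect (cell_adj A) a b].

Definition perm_class (C : bmat -> Prop) : Prop :=
  (forall A, C A -> is_perm_mat A) /\
  (forall A B, C B -> is_perm_mat A -> subm A B -> C A).

Definition poly_class (C : bmat -> Prop) : Prop :=
  (forall A, C A -> is_polyomino A) /\
  (forall A B, C B -> is_polyomino A -> subm A B -> C A).

Definition cplus (C : bmat -> Prop) (A : bmat) : Prop := exists B, C B /\ subm A B.

Definition mbasis_perm (C : bmat -> Prop) (A : bmat) : Prop :=
  [/\ is_quasi_perm A, ~ cplus C A &
      forall A', is_quasi_perm A' -> ~ cplus C A' -> subm A' A -> A' = A].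

Definition mbasis_poly (C : bmat -> Prop) (A : bmat) : Prop :=
  ~ cplus C A /\ (forall A', ~ cplus C A' -> subm A' A -> A' = A).

Definition Av_perm (M : bmat -> Prop) (A : bmat) : Prop :=
  is_perm_mat A /\ forall B, M B -> ~ subm B A.

Definition Av_poly (M : bmat -> Prop) (A : bmat) : Prop :=
  is_polyomino A /\ forall B, M B -> ~ subm B A.

(* Main.v *)
Require Import Defs.
From mathcomp Require Import all_boot all_algebra.
From mathcomp Require Import zify.
From Stdlib Require Import Classical.

Lemma subm_refl A : subm A A.
Proof. by exists id, id; split => // i j. Qed.

Lemma subm_trans A B C : subm A B -> subm B C -> subm A C.
Proof.
case=> f [g [hf hg e1]] [f' [g' [hf' hg' e2]]].
exists (f' \o f), (g' \o g); split.
- by move=> i j ij; apply: hf'; apply: hf.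
- by move=> i j ij; apply: hg'; apply: hg.
- by move=> i j /=; rewrite e1 e2.
Qed.

Lemma si_inj m n (f : 'I_m -> 'I_n) : strict_incr f -> injective f.
Proof.
move=> hf i j e; apply/val_inj => /=.
case: (ltngtP i j) => // h.
  by have := hf _ _ h; rewrite e ltnn.
by have := hf _ _ h; rewrite e ltnn.
Qed.

Lemma si_le m n (f : 'I_m -> 'I_n) : strict_incr f -> m <= n.
Proof.
move=> /si_inj hf; have := leq_card f hf; by rewrite !card_ord.
Qed.

Lemma si_id n (f : 'I_n -> 'I_n) : strict_incr f -> forall i, f i = i.
Proof.
move=> hf.
have lo : forall k (i : 'I_n), i = k :> nat -> k <= f i.
  elim=> [|k IH] i ei //.
  have hk : k < n by have := ltn_ord i; lia.
  have := IH (Ordinal hk) erefl.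
  have : Ordinal hk < i by rewrite /= ei.
  move/hf; lia.
have hi : forall k (i : 'I_n), n - i = k.+1 -> f i <= i.
  elim=> [|k IH] i ei.
    have := ltn_ord (f i); lia.
  have hk : i.+1 < n by lia.
  have := IH (Ordinal hk) ltac:(simpl; lia).
  have : i < Ordinal hk by rewrite /=.
  move/hf => /=; lia.
move=> i; apply/val_inj/eqP; rewrite eqn_leq; apply/andP; split.
  apply: (hi (n - i).-1); have := ltn_ord i; lia.
exact: lo.
Qed.

Lemma subm_eq A B : subm A B -> nrows A = nrows B -> ncols A = ncols B -> A = B.
Proof.
case: A => n m MA; case: B => n' m' MB /= [f [g [hf hg e]]] /= en em.
subst n' m'.
have hf' := @si_id n f hf; have hg' := @si_id m g hg.
congr BMat; apply/matrixP => i j; by rewrite e /= hf' hg'.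
Qed.

Lemma subm_size A B : subm A B -> nrows A <= nrows B /\ ncols A <= ncols B.
Proof. by case=> f [g [hf hg _]]; split; [apply: si_le hf | apply: si_le hg]. Qed.

Lemma exists_min (P : bmat -> Prop) A : P A ->
  exists B, [/\ P B, subm B A & forall B', P B' -> subm B' B -> B' = B].
Proof.
move: {2}(nrows A + ncols A) (leqnn (nrows A + ncols A)) => n.
elim: n A => [|n IH] A hs PA.
  exists A; split => //; [exact: subm_refl|].
  move=> B' _ s; have [h1 h2] := subm_size _ _ s; apply: (subm_eq _ _ s); lia.
destruct (classic (exists B', [/\ P B', subm B' A & B' <> A])) as [[B' [PB sB nB]]|H].
  have [h1 h2] := subm_size _ _ sB.
  have hlt : nrows B' + ncols B' <= n.
    case: (leqP (nrows B' + ncols B') n) => // h; exfalso; apply: nB.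
    apply: (subm_eq _ _ sB); lia.
  have [C [PC sC mC]] := IH B' hlt PB.
  exists C; split => //; exact: (subm_trans _ _ _ sC sB).
exists A; split => //; first exact: subm_refl.
move=> B' PB s; apply: NNPP => ne; apply: H; by exists B'.
Qed.

Theorem proposition4 :
  (forall C : bmat -> Prop, perm_class C ->
     forall A : bmat, C A <-> Av_perm (mbasis_perm C) A) /\
  (forall C : bmat -> Prop, poly_class C ->
     forall A : bmat, C A <-> Av_poly (mbasis_poly C) A).
Proof.
split.
- move=> C [h1 h2] A; split.
    move=> CA; split; first exact: h1.
    by move=> B [_ nc _] s; apply: nc; exists A.
  case=> pA av; apply: NNPP => nCA.
  have ncp : ~ cplus C A by case=> B [CB s]; apply: nCA; exact: h2 CB pA s.
  have qA : is_quasi_perm A.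
    by case: pA => a b; split => i; [rewrite a | rewrite b].
  have [B [[qB nB] sB mB]] := exists_min (fun X => is_quasi_perm X /\ ~ cplus C X) _ (conj qA ncp).
  apply: (av B) sB; split => // A' qA' nA' s; exact: mB.
- move=> C [h1 h2] A; split.
    move=> CA; split; first exact: h1.
    by move=> B [nc _] s; apply: nc; exists A.
  case=> pA av; apply: NNPP => nCA.
  have ncp : ~ cplus C A by case=> B [CB s]; apply: nCA; exact: h2 CB pA s.
  have [B [nB sB mB]] := exists_min (fun X => ~ cplus C X) _ ncp.
  by apply: (av B) sB; split.
Qed.
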